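(* Every hereditarily Lindelöf Tychonoff space $X$ which is an $F_{\sigma\delta}$ space has a complete sequence of countable disjoint $F_\sigma$ covers.
   Context: $X$ is an $F_{\sigma\delta}$ space if there is a compactification $cX$ of $X$ (a compact Hausdorff space containing a dense homeomorphic copy of $X$, identified with $X$) such that $X$ is a countable intersection of $F_\sigma$ subsets of $cX$. A filter on $X$ is a nonempty family of subsets of $X$ closed under supersets and finite intersections and not containing $\emptyset$; $x\in X$ is an accumulation point of a filter $\mathcal F$ if every neighborhood of $x$ meets every element of $\mathcal F$. A sequence $(\mathcal F_n)_{n\in\mathbb N}$ of covers of $X$ is complete if every filter on $X$ which contains some element of each $\mathcal F_n$ has an accumulation point in $X$. A cover is countable if it has countably many elements, disjoint if its elements are pairwise disjoint, and $F_\sigma$ if its elements are $F_\sigma$ subsets of $X$. *)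

(* Defs.v *)
From HB Require Import structures.
From mathcomp Require Import all_boot all_order all_algebra.
From mathcomp Require Import all_classical all_reals all_analysis.
From mathcomp Require Import Rstruct Rstruct_topology.
Unset Printing Implicit Defensive.
Import Order.TTheory GRing.Theory Num.Theory.
Local Open Scope classical_set_scope.

Definition tychonoff_space (T : topologicalType) : Prop :=
  hausdorff_space T /\
  forall (x : T) (B : set T), closed B -> ~ B x ->
    exists f : T -> Rdefinitions.R,
      continuous f /\ f x = 0%R /\ (forall y, B y -> f y = 1%R).

(* Hereditarily Lindelöf: every subspace A is Lindelöf, i.e. every cover of A
   by open subsets of T (traces of which are the open sets of A) has a
   countable subcover. *)
Definition hereditarily_lindelof (T : topologicalType) : Prop :=
  forall (A : set T) (I : Type) (U : I -> set T),
    (forall i, open (U i)) -> A `<=` \bigcup_i U i ->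
    exists J : set I, countable J /\ A `<=` \bigcup_(i in J) U i.

Definition Fsigma (T : topologicalType) (A : set T) : Prop :=
  exists F : nat -> set T, (forall n, closed (F n)) /\ A = \bigcup_n F n.

Definition embedding (T K : topologicalType) (e : T -> K) : Prop :=
  continuous e /\ injective e /\
  forall U : set T, open U -> exists V : set K, open V /\ e @` U = range e `&` V.

Definition Fsigmadelta_space (T : topologicalType) : Prop :=
  exists (K : topologicalType) (e : T -> K),
    compact [set: K] /\ hausdorff_space K /\ embedding T K e /\ dense (range e) /\
    exists G : nat -> set K, (forall n, Fsigma K (G n)) /\ range e = \bigcap_n G n.

Definition is_filter_on (T : Type) (F : set (set T)) : Prop :=
  F !=set0 /\
  (forall A B, F A -> A `<=` B -> F B) /\
  (forall A B, F A -> F B -> F (A `&` B)) /\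
  ~ F set0.

Definition accumulation_point (T : topologicalType) (F : set (set T)) (x : T) :=
  forall U A, nbhs x U -> F A -> U `&` A !=set0.

Definition is_cover (T : Type) (C : set (set T)) : Prop :=
  \bigcup_(A in C) A = [set: T].

Definition complete_seq (T : topologicalType) (C : nat -> set (set T)) : Prop :=
  forall F : set (set T), is_filter_on T F ->
    (forall n, exists A, C n A /\ F A) ->
    exists x : T, accumulation_point T F x.

Definition countable_disjoint_Fsigma_cover (T : topologicalType)
    (C : set (set T)) : Prop :=
  is_cover T C /\ countable C /\ trivIset C id /\ (forall A, C A -> Fsigma T A).

(* Main.v *)
Require Import Defs.
From mathcomp Require Import all_boot all_order all_algebra.
From mathcomp Require Import all_classical all_reals all_analysis.
From mathcomp Require Import Rstruct Rstruct_topology lra.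
Import Order.TTheory GRing.Theory Num.Theory.
Local Open Scope classical_set_scope.

Lemma open_Fsigma (X : topologicalType) :
  tychonoff_space X -> hereditarily_lindelof X ->
  forall W : set X, open W -> Fsigma X W.
Proof.
move=> [_ tych] hl W oW.
have : forall x, exists f : X -> Rdefinitions.R, continuous f /\
   (W x -> f x = 0%R) /\ (forall y, ~ W y -> f y = 1%R).
  move=> x; case: (pselect (W x)) => Wx.
  - have [f [cf [f0 f1]]] := tych x (~` W) (open_closedC oW) (fun h => h Wx).
    by exists f.
  - by exists (fun _ => 1%R); split; [exact: cst_continuous | split].
move=> /choice [g Hg].
pose U := fun x => g x @^-1` [set r : Rdefinitions.R | (r < 1/2)%R].
have oU : forall x, open (U x).
  by move=> x; apply: (proj1 (continuousP _) (proj1 (Hg x))); exact: open_lt.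
have cov : W `<=` \bigcup_x U x.
  move=> x Wx; exists x => //; rewrite /U /=.
  have [_ [/(_ Wx) -> _]] := Hg x; lra.
have [J [cJ WJ]] := hl W X U oU cov.
pose C := fun x => g x @^-1` [set r : Rdefinitions.R | (r <= 1/2)%R].
have cC : forall x, closed (C x).
  by move=> x; apply: (proj1 (continuous_closedP _) (proj1 (Hg x))); exact: closed_le.
have CW : forall x, C x `<=` W.
  move=> x y; rewrite /C /= => Cy; apply: contrapT => nW.
  have [_ [_ /(_ y nW) e1]] := Hg x; move: Cy; rewrite e1; lra.
have /countable_injP [h hinj] := cJ.
pose D := fun n => [set y | exists2 i, J i /\ h i = n & C i y].
exists D; split.
- move=> n; case: (pselect (exists i, J i /\ h i = n)) => [[i0 [Ji0 hi0]]|ne].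
  + have -> : D n = C i0; last exact: cC.
    apply/seteqP; split => y.
    * move=> [i [Ji hi] Ciy]; have ii0 : i = i0.
        by apply: hinj; rewrite ?inE //; rewrite hi hi0.
      by rewrite -ii0.
    * by move=> Cy; exists i0.
  + have -> : D n = set0; last exact: closed0.
    by apply/seteqP; split => y // [i Hi _]; case: ne; exists i.
- apply/seteqP; split => y.
  + move=> Wy; have [i Ji Uiy] := WJ y Wy.
    exists (h i) => //; exists i => //; rewrite /C /=; move: Uiy; rewrite /U /=; lra.
  + by move=> [n _ [i _ Ciy]]; exact: (CW i).
Qed.

Lemma open_finite_closed (X : topologicalType) (P : nat -> set X) :
  (forall k, closed (P k)) ->
  forall m, open [set x | forall k, (k < m)%N -> ~ P k x].
Proof.
move=> cP; elim=> [|m IH].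
  have -> : [set x | forall k, (k < 0)%N -> ~ P k x] = setT.
    by apply/seteqP; split => x //.
  exact: openT.
have -> : [set x | forall k, (k < m.+1)%N -> ~ P k x] =
    [set x | forall k, (k < m)%N -> ~ P k x] `&` ~` P m.
  apply/seteqP; split => x /=.
  - move=> H; split; first by move=> k km; apply: H; apply: ltnW.
    by apply: H.
  - move=> [H Hm] k; rewrite ltnS leq_eqVlt => /orP [/eqP -> //|]; exact: H.
by apply: openI => //; exact: closed_openC.
Qed.

Theorem lemma4p8 (X : topologicalType) :
  tychonoff_space X -> hereditarily_lindelof X -> Fsigmadelta_space X ->
  exists C : nat -> set (set X),
    (forall n, countable_disjoint_Fsigma_cover X (C n)) /\ complete_seq X C.
Proof.
move=> tX hX [K [e [cK [hK [[ce [ie emb]] [de [G [GF rG]]]]]]]].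
have /choice [Fk HFk] : forall n, exists F : nat -> set K,
    (forall m, closed (F m)) /\ G n = \bigcup_m F m by [].
pose P := fun n m => e @^-1` Fk n m.
have cP : forall n m, closed (P n m).
  by move=> n m; apply: (proj1 (continuous_closedP _) ce); exact: (proj1 (HFk n)).
pose A := fun n m => [set x | P n m x /\ forall k, (k < m)%N -> ~ P n k x].
exists (fun n => range (A n)); split.
- move=> n; split; [|split; [|split]].
  + apply/seteqP; split => // x _.
    have : range e (e x) by exists x.
    rewrite rG => /(_ n I); rewrite (proj2 (HFk n)) => -[m0 _ Hm0].
    have exm : exists m, `[< P n m x >] by exists m0; apply/asboolP.
    case: (ex_minnP exm) => m /asboolP Pm minm.
    exists (A n m); first by exists m.
    split => // k km Pk; have := minm k (asboolT Pk); rewrite leqNgt km //.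
  + exact: (card_le_trans (card_image_le _ _) (countableP _)).
  + move=> B B' [m _ <-] [m' _ <-] [x [[Pm Hm] [Pm' Hm']]].
    case: (ltngtP m m') => [lt|lt|-> //].
    * by case: (Hm' m lt).
    * by case: (Hm m' lt).
  + move=> B [m _ <-].
    have [D [cD eD]] := open_Fsigma _ tX hX _ (open_finite_closed _ _ (cP n) m).
    exists (fun j => P n m `&` D j); split; first by move=> j; apply: closedI.
    apply/seteqP; split => x.
    * move=> [Pm Hm].
      have : [set x | forall k, (k < m)%N -> ~ P n k x] x by [].
      rewrite eD => -[j _ Djx]; by exists j.
    * move=> [j _ [Pm Djx]]; split => //.
      have : (\bigcup_n0 D n0) x by exists j.
      by rewrite -eD.
- move=> F [[A0 FA0] [FS [FI F0]]] HC.
  have /choice [mm Hmm] : forall n, exists m, F (A n m).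
    by move=> n; have [B [[m _ <-] FB]] := HC n; exists m.
  pose GK := [set B : set K | F (e @^-1` B)].
  have GKT : GK setT by rewrite /GK /= preimage_setT; apply: FS FA0 _.
  have PF : ProperFilter GK.
    apply: Build_ProperFilter; first by rewrite /GK /= preimage_set0.
    apply: Build_Filter => //.
    - by move=> B B' GB GB'; rewrite /GK /= preimage_setI; apply: FI.
    - by move=> B B' sB GB; apply: FS GB _ => x /= /sB.
  have [p [_ clp]] := cK GK PF GKT.
  have Gp : forall n, G n p.
    move=> n; rewrite (proj2 (HFk n)); exists (mm n) => //.
    apply: contrapT => np.
    have nbp : nbhs p (~` Fk n (mm n)).
      by apply: open_nbhs_nbhs; split => //; apply: closed_openC; exact: (proj1 (HFk n)).
    have GB : GK (Fk n (mm n)).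
      by apply: FS (Hmm n) _ => x [].
    by have [y [a b]] := clp _ _ GB nbp.
  have : range e p by rewrite rG.
  case=> x _ ex; exists x.
  move=> U B nU FB; rewrite nbhsE in nU; case: nU => U' [oU' U'x] sU.
  have [V [oV eU]] := emb U' oU'.
  have Vp : V p.
    have : (e @` U') (e x) by exists x.
    by rewrite eU => -[_]; rewrite ex.
  have GB : GK (e @` B) by apply: FS FB _ => a Ba; exists a.
  have [z [[a Ba <-] Vz]] := clp _ _ GB (open_nbhs_nbhs (conj oV Vp)).
  have : (range e `&` V) (e a) by split => //; exists a.
  rewrite -eU => -[u U'u /ie eua].
  exists a; split; last exact: Ba.
  by apply: sU; rewrite -eua.
Qed.
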